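(* Let $R$ be a number ring and $I$ an ideal of $R$. For every integer $d\geq 2$ the following are equivalent: (1) the $R$-ideal $I$ can be generated by $d$ elements; (2) for every maximal ideal $\mathfrak p$ of $R$, the $R_{\mathfrak p}$-ideal $I_{\mathfrak p}$ can be generated by $d$ elements.
   Context: A number ring is a subring of a number field (a finite extension of $\mathbb{Q}$). $R_{\mathfrak p}$, $I_{\mathfrak p}$ denote localizations at $\mathfrak p$. *)

(* Defs.v *)
(* A number field is a finite-dimensional field extension
   L : fieldExtType rat; a number ring is a subring R of L, represented as a
   (Prop-valued) subset of L.  Ideals, localizations, etc. are subsets of L. *)
From HB Require Import structures.
From mathcomp Require Import all_boot all_order all_algebra all_field.
Set Implicit Arguments. Unset Strict Implicit. Unset Printing Implicit Defensive.
Import GRing.Theory.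
Local Open Scope ring_scope.

Section NumberRing.
Variable L : fieldExtType rat.

Definition is_subring (R : L -> Prop) : Prop :=
  R 1 /\ (forall x y, R x -> R y -> R (x - y)) /\
  (forall x y, R x -> R y -> R (x * y)).

Definition is_ideal (R I : L -> Prop) : Prop :=
  (forall x, I x -> R x) /\ I 0 /\
  (forall x y, I x -> I y -> I (x + y)) /\
  (forall r x, R r -> I x -> I (r * x)).

Definition is_maximal_ideal (R P : L -> Prop) : Prop :=
  is_ideal R P /\ (exists x, R x /\ ~ P x) /\
  forall J, is_ideal R J -> (forall x, P x -> J x) ->
    (forall x, J x -> P x) \/ (forall x, R x -> J x).

(* R_P, realized inside L (R is a domain, its fraction field embeds in L) *)
Definition localization (R P : L -> Prop) : L -> Prop :=
  fun x => exists r s, R r /\ R s /\ ~ P s /\ x = r / s.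

(* I_P = I R_P, realized inside L *)
Definition loc_ideal (R P I : L -> Prop) : L -> Prop :=
  fun x => exists i s, I i /\ R s /\ ~ P s /\ x = i / s.

Definition generated_by (A J : L -> Prop) (d : nat) : Prop :=
  exists g : 'I_d -> L, (forall j, J (g j)) /\
    forall x, J x <-> exists a : 'I_d -> L,
      (forall j, A (a j)) /\ x = \sum_(j < d) a j * g j.

End NumberRing.

(* Main.v *)
Require Import Defs.
From mathcomp Require Import all_boot all_order all_algebra all_field ring.
From Stdlib Require Import ClassicalEpsilon FunctionalExtensionality PropExtensionality Classical.
Set Implicit Arguments. Unset Strict Implicit. Unset Printing Implicit Defensive.
Import GRing.Theory Num.Theory.
Local Open Scope ring_scope.
Set Default Proof Using "All".

Module P1.

Definition pb (P : Prop) : bool := if excluded_middle_informative P then true else false.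
Lemma pbE (P : Prop) : pb P = true <-> P.
Proof. by rewrite /pb; case: excluded_middle_informative. Qed.
Lemma pbF (P : Prop) : pb P = false <-> ~ P.
Proof. by rewrite /pb; case: excluded_middle_informative. Qed.

Lemma fchoice (A B : Type) (Q : A -> B -> Prop) :
  (forall a, exists b, Q a b) -> exists f : A -> B, forall a, Q a (f a).
Proof.
move=> h; exists (fun a => proj1_sig (constructive_indefinite_description _ (h a))).
by move=> a; case: constructive_indefinite_description.
Qed.

Section Basic.
Variable L : fieldExtType rat.
Variable R : L -> Prop.
Hypothesis HR : is_subring R.

Lemma R1 : R 1. Proof. by move: HR => [h _]. Qed.
Lemma RB x y : R x -> R y -> R (x - y). Proof. by move: HR => [_ [h _]]; apply: h. Qed.
Lemma RM x y : R x -> R y -> R (x * y). Proof. by move: HR => [_ [_ h]]; apply: h. Qed.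
Lemma R0 : R 0. Proof. by rewrite -(subrr 1); apply: RB; apply: R1. Qed.
Lemma RN x : R x -> R (- x). Proof. by move=> h; rewrite -sub0r; apply: RB => //; apply: R0. Qed.
Lemma RD x y : R x -> R y -> R (x + y).
Proof. by move=> hx hy; rewrite -[y]opprK; apply: RB => //; apply: RN. Qed.
Lemma Rsum (T : Type) (r : seq T) (P : pred T) (F : T -> L) :
  (forall i, P i -> R (F i)) -> R (\sum_(i <- r | P i) F i).
Proof. by move=> h; apply: (big_ind R R0 RD) => i /h. Qed.
Lemma Rnat n : R n%:R.
Proof. elim: n => [|n ih]; first exact: R0. by rewrite -addn1 natrD; apply: RD => //; apply: R1. Qed.
Lemma Rint (z : int) : R z%:~R.
Proof. by case: z => n; [exact: (Rnat n) | exact: (RN (Rnat n.+1))]. Qed.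
Lemma RX x n : R x -> R (x ^+ n).
Proof. move=> hx; elim: n => [|n ih]; first exact: R1. by rewrite exprS; apply: RM. Qed.

Section Ideal.
Variable I : L -> Prop.
Hypothesis hI : is_ideal R I.
Lemma Isub x : I x -> R x. Proof. by move: hI => [h _]; apply: h. Qed.
Lemma I0 : I 0. Proof. by move: hI => [_ [h _]]. Qed.
Lemma ID x y : I x -> I y -> I (x + y). Proof. by move: hI => [_ [_ [h _]]]; apply: h. Qed.
Lemma IM r x : R r -> I x -> I (r * x). Proof. by move: hI => [_ [_ [_ h]]]; apply: h. Qed.
Lemma IMr r x : R r -> I x -> I (x * r). Proof. by move=> *; rewrite mulrC; apply: IM. Qed.
Lemma IN x : I x -> I (- x).
Proof. by move=> h; rewrite -mulN1r; apply: IM => //; apply: RN; apply: R1. Qed.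
Lemma IB x y : I x -> I y -> I (x - y). Proof. by move=> hx hy; apply: ID => //; apply: IN. Qed.
Lemma Isum (T : Type) (r : seq T) (P : pred T) (F : T -> L) :
  (forall i, P i -> I (F i)) -> I (\sum_(i <- r | P i) F i).
Proof. by move=> h; apply: (big_ind I I0 ID) => i /h. Qed.
Lemma Iint (z : int) x : I x -> I (z%:~R * x). Proof. by move=> h; apply: IM => //; apply: Rint. Qed.
Lemma I1 : I 1 -> forall x, R x -> I x.
Proof. by move=> h x hx; rewrite -[x]mulr1; apply: IM. Qed.
End Ideal.

Lemma idealR : is_ideal R R.
Proof. by split => //; split; [apply: R0 | split; [apply: RD | apply: RM]]. Qed.

Definition PX (P X : L -> Prop) y := exists s : seq (L * L),
  (forall pr, pr \in s -> P pr.1 /\ X pr.2) /\ y = \sum_(pr <- s) pr.1 * pr.2.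

Section PXs.
Variables P X : L -> Prop.
Hypothesis hP : is_ideal R P.
Hypothesis hX : is_ideal R X.
Lemma PX0 : PX P X 0. Proof. by exists [::]; split => //; rewrite big_nil. Qed.
Lemma PXD y z : PX P X y -> PX P X z -> PX P X (y + z).
Proof.
move=> [s [hs ->]] [t [ht ->]]; exists (s ++ t); split; last by rewrite big_cat.
by move=> pr; rewrite mem_cat => /orP [/hs | /ht].
Qed.
Lemma PXm p x : P p -> X x -> PX P X (p * x).
Proof. by move=> hp hx; exists [:: (p, x)]; split; [move=> pr; rewrite inE => /eqP -> | rewrite big_seq1]. Qed.
Lemma PXM r y : R r -> PX P X y -> PX P X (r * y).
Proof.
move=> hr [s [hs ->]]; exists [seq (r * pr.1, pr.2) | pr <- s]; split.
  move=> pr /mapP [q /hs [h1 h2] ->] /=; split => //; exact: IM.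
by rewrite big_map mulr_sumr; apply: eq_bigr => i _; rewrite mulrA.
Qed.
Lemma PXN y : PX P X y -> PX P X (- y).
Proof. by move=> h; rewrite -mulN1r; apply: PXM => //; apply: RN; apply: R1. Qed.
Lemma PXB y z : PX P X y -> PX P X z -> PX P X (y - z).
Proof. by move=> *; apply: PXD => //; apply: PXN. Qed.
Lemma PXsum (T : Type) (r : seq T) (Q : pred T) (F : T -> L) :
  (forall i, Q i -> PX P X (F i)) -> PX P X (\sum_(i <- r | Q i) F i).
Proof. by move=> h; apply: (big_ind (PX P X) PX0 PXD) => i /h. Qed.
Lemma PX_P y : PX P X y -> P y.
Proof.
move=> [s [hs ->]]; rewrite big_seq; apply: (Isum hP) => pr /hs [h1 h2].
by rewrite mulrC; apply: IM => //; apply: Isub hX _ h2.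
Qed.
End PXs.

End Basic.

End P1.
Import P1.

Module P2.

Section Two.
Variable L : fieldExtType rat.
Variable R : L -> Prop.
Hypothesis HR : is_subring R.
Let R0 := @R0 _ _ HR. Let R1 := @R1 _ _ HR. Let RB := @RB _ _ HR. Let RM := @RM _ _ HR.
Let RN := @RN _ _ HR. Let RD := @RD _ _ HR. Let Rsum := @Rsum _ _ HR. Let Rnat := @Rnat _ _ HR.
Let Rint := @Rint _ _ HR. Let RX := @RX _ _ HR.

Definition span k (g : 'I_k -> L) x :=
  exists a : 'I_k -> L, (forall j, R (a j)) /\ x = \sum_j a j * g j.

Lemma sum_delta k (j : 'I_k) (F : 'I_k -> L) : \sum_i (i == j)%:R * F i = F j.
Proof.
rewrite (bigD1 j) //= eqxx mul1r big1 ?addr0 // => i /negbTE ->; by rewrite mul0r.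
Qed.

Lemma span_ideal k (g : 'I_k -> L) : (forall j, R (g j)) -> is_ideal R (span g).
Proof.
move=> hg; split; [|split; [|split]].
- move=> x [a [ha ->]]; apply: Rsum => // i _; exact: RM.
- exists (fun _ => 0); split => [j|]; first exact: R0.
  by rewrite big1 // => i _; rewrite mul0r.
- move=> x y [a [ha ->]] [b [hb ->]]; exists (fun j => a j + b j); split.
    by move=> j; apply: RD.
  by rewrite -big_split; apply: eq_bigr => i _; rewrite mulrDl.
- move=> r x hr [a [ha ->]]; exists (fun j => r * a j); split.
    by move=> j; apply: RM.
  by rewrite mulr_sumr; apply: eq_bigr => i _; rewrite mulrA.
Qed.

Lemma span_gen k (g : 'I_k -> L) j : span g (g j).
Proof.
exists (fun i => (i == j)%:R); split; last by rewrite sum_delta.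
by move=> i; apply: Rnat.
Qed.

Section Max.
Variable P : L -> Prop.
Hypothesis hP : is_maximal_ideal R P.

Lemma mI : is_ideal R P. Proof. by case: hP. Qed.

Lemma m_not1 : ~ P 1.
Proof.
move: hP => [_ [[x [hx hnx]] _]] h1; apply: hnx.
by rewrite -[x]mulr1; exact: (IM HR mI hx h1).
Qed.

Lemma m_inv r : R r -> ~ P r -> exists u, R u /\ P (u * r - 1).
Proof.
move=> hr hnr.
pose J x := exists p y, P p /\ R y /\ x = p + y * r.
have hJ : is_ideal R J.
  split; [|split; [|split]].
  - move=> x [p [y [hp [hy ->]]]]; apply: RD => //; first exact: (Isub HR mI).
    exact: RM.
  - exists 0, 0; split; first exact: (I0 HR mI).
    by split; [exact: R0 | rewrite mul0r addr0].
  - move=> x z [p [y [hp [hy ->]]]] [p' [y' [hp' [hy' ->]]]].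
    exists (p + p'), (y + y'); split; first exact: (ID HR mI).
    split; [exact: RD | ring].
  - move=> r' x hr' [p [y [hp [hy ->]]]]; exists (r' * p), (r' * y).
    split; first exact: (IM HR mI).
    split; [exact: RM | ring].
move: hP => [_ [_ hmax]].
case: (hmax J hJ).
- move=> p hp; exists p, 0; split => //; split; [exact: R0 | by rewrite mul0r addr0].
- move=> h; exfalso; apply: hnr; apply: h.
  exists 0, 1; split; first exact: (I0 HR mI).
  by split; [exact: R1 | rewrite add0r mul1r].
- move=> h; have [p [y [hp [hy e]]]] := h 1 R1.
  exists y; split => //.
  have -> : y * r - 1 = - p by rewrite e; ring.
  exact: (IN HR mI).
Qed.

Lemma m_prime a b : R a -> R b -> P (a * b) -> ~ P a -> P b.
Proof.
move=> ha hb hab hna; have [u [hu hua]] := m_inv ha hna.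
have -> : b = u * (a * b) - (u * a - 1) * b by ring.
apply: (IB HR mI); first exact: (IM HR mI).
by apply: (IMr HR mI).
Qed.

Lemma m_mul a b : R a -> R b -> ~ P a -> ~ P b -> ~ P (a * b).
Proof. by move=> ha hb hna hnb hab; apply: hnb; apply: (m_prime ha hb hab). Qed.

Lemma m_prod (T : Type) (s : seq T) (F : T -> L) :
  (forall i, R (F i) /\ ~ P (F i)) -> R (\prod_(i <- s) F i) /\ ~ P (\prod_(i <- s) F i).
Proof.
move=> h; elim: s => [|x s [ih1 ih2]].
  by rewrite big_nil; split; [exact: R1 | exact: m_not1].
rewrite big_cons; have [h1 h2] := h x; split; first exact: RM.
exact: m_mul.
Qed.

End Max.

Definition SM (P I : L -> Prop) k (g : 'I_k -> L) z :=
  exists b : 'I_k -> L, (forall l, R (b l)) /\ PX P I (z - \sum_l b l * g l).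

Definition good (P I : L -> Prop) k (g : 'I_k -> L) := forall x, I x -> SM P I g x.

Section SMs.
Variables P I : L -> Prop.
Hypothesis hP : is_ideal R P.
Hypothesis hI : is_ideal R I.
Variable k : nat.
Variable g : 'I_k -> L.
Let PX0 := @PX0 _ _ HR _ _ hP hI. Let PXD := @PXD _ _ HR _ _ hP hI.
Let PXM := @PXM _ _ HR _ _ hP hI. Let PXN := @PXN _ _ HR _ _ hP hI.
Let PXm := @PXm _ _ HR _ _ hP hI. Let PXB := @PXB _ _ HR _ _ hP hI.

Lemma SMPX z : PX P I z -> SM P I g z.
Proof.
move=> h; exists (fun _ => 0); split => [l|]; first exact: R0.
by rewrite big1 ?subr0 // => i _; rewrite mul0r.
Qed.
Lemma SM0 : SM P I g 0. Proof. exact: (SMPX PX0). Qed.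
Lemma SMD y z : SM P I g y -> SM P I g z -> SM P I g (y + z).
Proof.
move=> [a [ha hy]] [b [hb hz]]; exists (fun l => a l + b l); split.
  by move=> l; apply: RD.
have -> : y + z - \sum_l (a l + b l) * g l =
  (y - \sum_l a l * g l) + (z - \sum_l b l * g l).
  have e : \sum_l (a l + b l) * g l = \sum_l a l * g l + \sum_l b l * g l.
    by rewrite -big_split; apply: eq_bigr => i _; rewrite mulrDl.
  rewrite e; ring.
exact: PXD.
Qed.
Lemma SMM r z : R r -> SM P I g z -> SM P I g (r * z).
Proof.
move=> hr [a [ha hz]]; exists (fun l => r * a l); split.
  by move=> l; apply: RM.
have -> : r * z - \sum_l r * a l * g l = r * (z - \sum_l a l * g l).
  by rewrite mulrBr mulr_sumr; congr (_ - _); apply: eq_bigr => i _; rewrite mulrA.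
exact: PXM.
Qed.
Lemma SMN z : SM P I g z -> SM P I g (- z).
Proof. by move=> h; rewrite -mulN1r; apply: SMM => //; apply: RN; apply: R1. Qed.
Lemma SMB y z : SM P I g y -> SM P I g z -> SM P I g (y - z).
Proof. by move=> *; apply: SMD => //; apply: SMN. Qed.
Lemma SMg l : SM P I g (g l).
Proof.
exists (fun i => (i == l)%:R); split; first by move=> i; apply: Rnat.
by rewrite sum_delta subrr; apply: PX0.
Qed.
Lemma SMsum (T : Type) (r : seq T) (Q : pred T) (F : T -> L) :
  (forall i, Q i -> SM P I g (F i)) -> SM P I g (\sum_(i <- r | Q i) F i).
Proof. by move=> h; apply: (big_ind (SM P I g) SM0 SMD) => i /h. Qed.

End SMs.

Lemma SM_trans P I k (g : 'I_k -> L) k' (g' : 'I_k' -> L) z :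
  is_ideal R P -> is_ideal R I ->
  (forall i, SM P I g' (g i)) -> SM P I g z -> SM P I g' z.
Proof.
move=> hP hI h [a [ha hz]].
have -> : z = (z - \sum_l a l * g l) + \sum_l a l * g l by rewrite subrK.
apply: (SMD hP hI (SMPX hP hI g' hz)); apply: (SMsum hP hI) => i _.
exact: (SMM hP hI).
Qed.

Lemma good_trans P I k (g : 'I_k -> L) k' (g' : 'I_k' -> L) :
  is_ideal R P -> is_ideal R I ->
  good P I g -> (forall i, SM P I g' (g i)) -> good P I g'.
Proof. by move=> hP hI hg h x /hg; apply: SM_trans hP hI h. Qed.

Lemma good_congr P I k (g h : 'I_k -> L) :
  is_ideal R P -> is_ideal R I ->
  good P I h -> (forall j, PX P I (g j - h j)) -> good P I g.
Proof.
move=> hP hI hh hgh; apply: (good_trans hP hI hh) => i.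
have -> : h i = g i - (g i - h i) by ring.
by apply: (SMB hP hI); [apply: (SMg hP hI) | apply: (SMPX hP hI)].
Qed.

Lemma good_unit P I k (g : 'I_k -> L) z :
  is_maximal_ideal R P -> is_ideal R I ->
  span g z -> R z -> ~ P z -> good P I g.
Proof.
move=> hP hI [a [ha ez]] hz hnz x hx.
have [u [hu hu1]] := m_inv hP hz hnz.
have hxR := Isub HR hI hx.
exists (fun j => u * x * a j); split; first by move=> j; apply: RM => //; apply: RM.
have -> : x - \sum_l u * x * a l * g l = - ((u * z - 1) * x).
  have e : \sum_l u * x * a l * g l = u * x * \sum_i a i * g i.
    by rewrite mulr_sumr; apply: eq_bigr => i _; rewrite mulrA.
  rewrite e ez; ring.
by apply: (PXN HR (mI hP) hI); apply: (PXm HR (mI hP) hI).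
Qed.

End Two.

End P2.
Import P2.

Module P3.
Section Three.
Variable L : fieldExtType rat.
Variable R : L -> Prop.
Hypothesis HR : is_subring R.
Local Notation R0 := (P1.R0 HR). Local Notation R1 := (P1.R1 HR). Local Notation RB := (P1.RB HR). Local Notation RM := (P1.RM HR).
Local Notation RN := (P1.RN HR). Local Notation RD := (P1.RD HR). Local Notation Rsum := (P1.Rsum HR). Local Notation Rnat := (P1.Rnat HR).
Local Notation Rint := (P1.Rint HR). Local Notation RX := (P1.RX HR).
Local Notation Isub := (P1.Isub HR). Local Notation I0 := (P1.I0 HR). Local Notation ID := (P1.ID HR). Local Notation IM := (P1.IM HR).
Local Notation IMr := (P1.IMr HR). Local Notation IN := (P1.IN HR). Local Notation IB := (P1.IB HR). Local Notation Isum := (P1.Isum HR).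
Local Notation Iint := (P1.Iint HR). Local Notation I1 := (P1.I1 HR).
Local Notation PX0 := (P1.PX0 HR). Local Notation PXD := (P1.PXD HR). Local Notation PXm := (P1.PXm HR). Local Notation PXM := (P1.PXM HR).
Local Notation PXN := (P1.PXN HR). Local Notation PXB := (P1.PXB HR). Local Notation PXsum := (P1.PXsum HR). Local Notation PX_P := (P1.PX_P HR).
Local Notation idealR := (P1.idealR HR).
Local Notation span_ideal := (P2.span_ideal HR). Local Notation span_gen := (P2.span_gen HR). Local Notation mI := (P2.mI HR).
Local Notation m_not1 := (P2.m_not1 HR). Local Notation m_inv := (P2.m_inv HR). Local Notation m_prime := (P2.m_prime HR).
Local Notation m_mul := (P2.m_mul HR). Local Notation m_prod := (P2.m_prod HR).
Local Notation SMPX := (P2.SMPX HR). Local Notation SM0 := (P2.SM0 HR). Local Notation SMD := (P2.SMD HR). Local Notation SMM := (P2.SMM HR).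
Local Notation SMN := (P2.SMN HR). Local Notation SMB := (P2.SMB HR). Local Notation SMg := (P2.SMg HR). Local Notation SMsum := (P2.SMsum HR).
Local Notation SM_trans := (P2.SM_trans HR). Local Notation good_trans := (P2.good_trans HR).
Local Notation good_congr := (P2.good_congr HR). Local Notation good_unit := (P2.good_unit HR).

Local Notation spn := (P2.span R).

Lemma exchange P I d (h : 'I_d -> L) y (i0 : 'I_d) :
  is_maximal_ideal R P -> is_ideal R I -> (forall j, I (h j)) -> good R P I h ->
  I y -> ~ PX P I y ->
  exists h' : 'I_d -> L, h' i0 = y /\ (forall j, I (h' j)) /\ good R P I h'.
Proof.
move=> hP hI hh hg hy hny.
have hPi := mI hP.
have [c [hc hyc]] := hg y hy.
have [j hj] : exists j, ~ P (c j).
  apply: NNPP => hn; apply: hny.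
  have -> : y = (y - \sum_i c i * h i) + \sum_i c i * h i by rewrite subrK.
  apply: (PXD hPi hI) => //; apply: (PXsum hPi hI) => i _.
  apply: (PXm hPi hI) => //; apply: NNPP => hci; apply: hn; by exists i.
have [u [hu hu1]] := m_inv hP (hc j) hj.
pose h' : 'I_d -> L := fun i : 'I_d => if i == i0 then y else if i == j then h i0 else h i.
have hh'0 : h' i0 = y by rewrite /h' eqxx.
exists h'; split => //; split.
  by move=> i; rewrite /h'; case: ifP => _ //; case: ifP.
apply: (good_trans hPi hI hg) => i.
have hsm : forall i : 'I_d, i != j -> SM R P I h' (h i).
  move=> i1 hij; case: (eqVneq i1 i0) => [e|hi0].
  - rewrite e in hij *.
    have -> : h i0 = h' j by rewrite /h' eq_sym (negbTE hij) eqxx.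
    exact: (SMg hPi hI).
  - have -> : h i1 = h' i1 by rewrite /h' (negbTE hi0) (negbTE hij).
    exact: (SMg hPi hI).
case: (eqVneq i j) => [->|hij]; last exact: hsm.
have eb : \sum_i c i * h i = c j * h j + \sum_(i | i != j) c i * h i.
  by rewrite (bigD1 j).
have e : h j = - ((u * c j - 1) * h j) + u * h' i0 - u * (y - \sum_i c i * h i)
              - u * \sum_(i | i != j) c i * h i.
  by rewrite hh'0 eb; ring.
rewrite e; apply: (SMB hPi hI (g := h')); first apply: (SMB hPi hI (g := h')).
- apply: (SMD hPi hI (g := h')).
  + by apply: (SMN hPi hI (g := h')); apply: (SMPX hPi hI h'); apply: (PXm hPi hI).
  + by apply: (SMM hPi hI (g := h')) => //; apply: (SMg hPi hI h').
- by apply: (SMPX hPi hI h'); apply: (PXM hPi hI).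
- apply: (SMM hPi hI (g := h')) => //; apply: (SMsum hPi hI (g := h')) => i1 hi1.
  apply: (SMM hPi hI (g := h')); [exact: hc | exact: hsm].
Qed.

Lemma nak_ind P (J : L -> Prop) : is_maximal_ideal R P -> is_ideal R J ->
  forall k (f : 'I_k -> L) s0, (forall i, R (f i)) -> R s0 -> ~ P s0 ->
  (forall i, exists j (c : 'I_k -> L), J j /\ (forall l, P (c l)) /\
      s0 * f i = j + \sum_l c l * f l) ->
  exists t, R t /\ ~ P t /\ forall i, J (t * f i).
Proof.
move=> hP hJ; have hPi := mI hP; have cR : forall c, P c -> R c := Isub hPi.
elim=> [|k ih] f s0 hf hs0 hns0 hrel.
  by exists 1; split; [exact: R1 | split; [exact: m_not1 hP | case]].
have [jk [ck [hjk [hck ek]]]] := hrel ord_max.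
rewrite big_ord_recr /= in ek.
pose s1 := s0 - ck ord_max.
have hs1 : R s1 := RB hs0 (cR _ (hck _)).
have hns1 : ~ P s1.
  move=> h; apply: hns0; have -> : s0 = s1 + ck ord_max by rewrite /s1 subrK.
  exact: (ID hPi h (hck _)).
have ek' : s1 * f ord_max = jk + \sum_(i < k) ck (widen_ord (leqnSn k) i) * f (widen_ord (leqnSn k) i).
  by rewrite /s1 mulrBl ek; ring.
have hrel' : forall i : 'I_k, exists j (c : 'I_k -> L), J j /\ (forall l, P (c l)) /\
   s1 * s0 * f (widen_ord (leqnSn k) i) = j + \sum_l c l * f (widen_ord (leqnSn k) l).
  move=> i; have [ji [ci [hji [hci ei]]]] := hrel (widen_ord (leqnSn k) i).
  rewrite big_ord_recr /= in ei.
  exists (s1 * ji + ci ord_max * jk),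
    (fun l => s1 * ci (widen_ord (leqnSn k) l) + ci ord_max * ck (widen_ord (leqnSn k) l)).
  split; first exact: (ID hJ (IM hJ hs1 hji) (IM hJ (cR _ (hci _)) hjk)).
  split.
    move=> l; apply: (ID hPi); first exact: (IM hPi hs1 (hci _)).
    by rewrite mulrC; apply: (IM hPi (cR _ (hck _)) (hci _)).
  set Si := \sum_(i0 < k) ci (widen_ord (leqnSn k) i0) * f (widen_ord (leqnSn k) i0) in ei.
  set Sk := \sum_(i0 < k) ck (widen_ord (leqnSn k) i0) * f (widen_ord (leqnSn k) i0) in ek'.
  have es : \sum_l (s1 * ci (widen_ord (leqnSn k) l) + ci ord_max * ck (widen_ord (leqnSn k) l))
              * f (widen_ord (leqnSn k) l) = s1 * Si + ci ord_max * Sk.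
    by rewrite /Si /Sk !mulr_sumr -big_split /=; apply: eq_bigr => l _; ring.
  apply/eqP; rewrite -subr_eq0; apply/eqP.
  rewrite es -(mulrA s1 s0) ei.
  have -> : s1 * (ji + (Si + ci ord_max * f ord_max)) - (s1 * ji + ci ord_max * jk + (s1 * Si + ci ord_max * Sk))
     = ci ord_max * (s1 * f ord_max - (jk + Sk)) by ring.
  by rewrite ek' subrr mulr0.
have [t' [ht' [hnt' hJt']]] := ih (fun i => f (widen_ord (leqnSn k) i)) (s1 * s0)
 (fun i => hf _) (RM hs1 hs0) (m_mul hP hs1 hs0 hns1 hns0) hrel'.
exists (t' * s1); split; first exact: RM.
split; first exact: m_mul.
move=> i; case: (unliftP ord_max i) => [i' ->|->].
  have -> : lift ord_max i' = widen_ord (leqnSn k) i'.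
    by apply: val_inj; rewrite /= /bump leqNgt ltn_ord.
  rewrite [t' * s1]mulrC -mulrA; exact: (IM hJ hs1 (hJt' i')).
rewrite -mulrA ek' mulrDr mulr_sumr; apply: (ID hJ (IM hJ ht' hjk)).
apply: (Isum hJ) => l _.
have -> : t' * (ck (widen_ord (leqnSn k) l) * f (widen_ord (leqnSn k) l)) =
   ck (widen_ord (leqnSn k) l) * (t' * f (widen_ord (leqnSn k) l)) by ring.
exact: (IM hJ (cR _ (hck _)) (hJt' l)).
Qed.

Lemma PX_coef P I k (f : 'I_k -> L) y : is_ideal R P -> is_ideal R I ->
  (forall x, I x -> spn f x) -> PX P I y ->
  exists c : 'I_k -> L, (forall l, P (c l)) /\ y = \sum_l c l * f l.
Proof.
move=> hP hI hf [s [hs ->]]; elim: s hs => [|[p x] s ih] hs.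
  exists (fun _ => 0); split; first by move=> l; exact: (I0 hP).
  by rewrite big_nil big1 // => l _; rewrite mul0r.
have hs' : forall pr, pr \in s -> P pr.1 /\ I pr.2.
  by move=> pr hpr; apply: hs; rewrite inE hpr orbT.
rewrite big_cons /=.
have [c [hc ->]] := ih hs'.
have [hp hx] := hs (p, x) (mem_head _ _).
have [a [ha ex]] := hf x hx.
exists (fun l => p * a l + c l); split.
  by move=> l; apply: (ID hP) => //; rewrite mulrC; apply: (IM hP (ha l) hp).
rewrite ex mulr_sumr -big_split /=; apply: eq_bigr => l _; ring.
Qed.

Lemma nakayama P I k (f : 'I_k -> L) (J : L -> Prop) :
  is_maximal_ideal R P -> is_ideal R I -> is_ideal R J ->
  (forall i, I (f i)) -> (forall x, I x -> spn f x) ->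
  (forall x, I x -> exists j, J j /\ PX P I (x - j)) ->
  forall x, I x -> exists t, R t /\ ~ P t /\ J (t * x).
Proof.
move=> hP hI hJ hfI hf hloc.
have hPi := mI hP.
have [t [ht [hnt hJt]]] : exists t, R t /\ ~ P t /\ forall i, J (t * f i).
  apply: (nak_ind hP hJ (f := f) (s0 := 1)).
  - by move=> i; apply: (Isub hI (hfI i)).
  - exact: R1.
  - exact: m_not1.
  - move=> i; have [j [hj hpx]] := hloc _ (hfI i).
    have [c [hc ec]] := PX_coef hPi hI hf hpx.
    exists j, c; split => //; split => //.
    by rewrite mul1r -ec addrC subrK.
move=> x hx; have [a [ha ->]] := hf x hx.
exists t; split => //; split => //.
rewrite mulr_sumr; apply: (Isum hJ) => i _.
have -> : t * (a i * f i) = a i * (t * f i) by ring.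
exact: (IM hJ (ha i) (hJt i)).
Qed.

End Three.

End P3.
Import P3.

Module P4.

Lemma natL_neq0 (L : fieldExtType rat) n : (0 < n)%N -> (n%:R : L) != 0.
Proof.
move=> hn; have -> : (n%:R : L) = in_alg L n%:R by rewrite rmorph_nat.
by rewrite fmorph_eq0 pnatr_eq0 -lt0n.
Qed.

Lemma intL_eq0 (L : fieldExtType rat) (z : int) : ((z%:~R : L) == 0) = (z == 0).
Proof.
have -> : (z%:~R : L) = in_alg L z%:~R by rewrite rmorph_int.
by rewrite fmorph_eq0 intr_eq0.
Qed.

Lemma intL_mul (L : fieldExtType rat) (z : int) (x : L) : z%:~R * x = (z%:~R : rat) *: x.
Proof. by rewrite mulrzl scaler_int. Qed.

Lemma dep_rat (L : fieldExtType rat) k (x : 'I_k -> L) :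
  (\dim (fullv : {vspace L}) < k)%N ->
  exists c : 'I_k -> rat, (exists i, c i != 0) /\ \sum_i c i *: x i = 0.
Proof.
move=> hk.
set X := [tuple x i | i < k].
have nf : ~~ free X.
  rewrite /free size_tuple; apply/negP => /eqP h.
  have := dimvS (subvf <<X>>%VS); rewrite h => h2.
  by move: (leq_ltn_trans h2 hk); rewrite ltnn.
apply: NNPP => hn; move/negP: nf; apply; apply/freeP => c hc i.
apply: NNPP => hci; apply: hn; exists c; split; first by exists i; apply/eqP.
rewrite -[RHS]hc; apply: eq_bigr => j _; by rewrite -tnth_nth tnth_map tnth_ord_tuple.
Qed.

Lemma dep_int (L : fieldExtType rat) k (x : 'I_k -> L) :
  (\dim (fullv : {vspace L}) < k)%N ->
  exists z : 'I_k -> int, (exists i, z i != 0) /\ \sum_i (z i)%:~R * x i = 0.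
Proof.
move=> /(dep_rat x) [c [[i0 hi0] hc]].
pose D := \prod_i denq (c i).
exists (fun i => numq (c i) * \prod_(j | j != i) denq (c j)); split.
  exists i0; rewrite mulf_neq0 // ?numq_eq0 //.
  by apply/prodf_neq0 => j _; apply: denq_neq0.
have e : forall i, ((numq (c i) * \prod_(j | j != i) denq (c j))%:~R : rat) = D%:~R * c i.
  move=> i; rewrite (intrM _ (numq (c i))) numqE /D [in RHS](bigD1 i) //= (intrM _ (denq (c i))); ring.
under eq_bigr => i _ do rewrite intL_mul e -scalerA.
by rewrite -scaler_sumr hc scaler0.
Qed.

Section B.
Variable L : fieldExtType rat.
Variable R : L -> Prop.
Hypothesis HR : is_subring R.

Lemma stepB b : R b -> b != 0 -> exists N : nat, (0 < N)%N /\ exists r, R r /\ N%:R = b * r.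
Proof.
move=> hb hb0.
pose n := \dim (fullv : {vspace L}).
pose Q m := pb (exists z : 'I_m.+1 -> int, (exists i, z i != 0) /\ \sum_i (z i)%:~R * b ^+ i = 0).
have exQ : exists m, Q m.
  exists n; apply/pbE; apply: dep_int; exact: ltnSn.
case: (ex_minnP exQ) => m /pbE [z [[i0 hi0] hz]] hmin.
have hz0 : z ord0 != 0.
  apply/negP => /eqP h0.
  rewrite big_ord_recl h0 mul0r add0r in hz.
  case: m z i0 hi0 hz hmin h0 => [|m] z i0 hi0 hz hmin h0.
    by move: hi0; rewrite (ord1 i0) h0 eqxx.
  have hm : Q m.
    apply/pbE; exists (fun i => z (lift ord0 i)); split.
      case: (unliftP ord0 i0) hi0 => [j ->|->]; last by rewrite h0 eqxx.
      by move=> h; exists j.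
    have : b * \sum_(i < m.+1) (z (lift ord0 i))%:~R * b ^+ i = 0.
      rewrite -[RHS]hz mulr_sumr; apply: eq_bigr => i _; rewrite lift0 exprS; ring.
    by move/eqP; rewrite mulf_eq0 (negbTE hb0) /= => /eqP.
  by move: (hmin m hm); rewrite ltnn.
rewrite big_ord_recl expr0 mulr1 in hz.
pose S := \sum_(i < m) (z (lift ord0 i))%:~R * b ^+ i.
have eS : \sum_(i < m) (z (lift ord0 i))%:~R * b ^+ (lift ord0 i) = b * S.
  rewrite /S mulr_sumr; apply: eq_bigr => i _; rewrite lift0 exprS; ring.
rewrite eS in hz.
have hS : R S.
  apply: Rsum => // i _; apply: RM => //; [exact: Rint | exact: RX].
case: (z ord0) hz0 hz => [k|k] hk hz.
- exists k; split; first by rewrite lt0n; move: hk; apply: contra => /eqP ->.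
  exists (- S); split; first exact: RN.
  have -> : (k%:R : L) = (Posz k)%:~R by [].
  by apply: (addIr (b * S)); rewrite hz; ring.
- exists k.+1; split => //.
  exists S; split => //.
  have -> : (k.+1%:R : L) = - (Negz k)%:~R by rewrite NegzE mulrNz opprK.
  by apply: (addrI ((Negz k)%:~R)); rewrite hz; ring.
Qed.

End B.

End P4.
Import P4.

Module P5.
Section Five.
Variable L : fieldExtType rat.
Variable R : L -> Prop.
Hypothesis HR : is_subring R.
Local Notation R0 := (P1.R0 HR). Local Notation R1 := (P1.R1 HR). Local Notation RB := (P1.RB HR). Local Notation RM := (P1.RM HR).
Local Notation RN := (P1.RN HR). Local Notation RD := (P1.RD HR). Local Notation Rsum := (P1.Rsum HR). Local Notation Rnat := (P1.Rnat HR).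
Local Notation Rint := (P1.Rint HR). Local Notation RX := (P1.RX HR).
Local Notation Isub := (P1.Isub HR). Local Notation I0 := (P1.I0 HR). Local Notation ID := (P1.ID HR). Local Notation IM := (P1.IM HR).
Local Notation IMr := (P1.IMr HR). Local Notation IN := (P1.IN HR). Local Notation IB := (P1.IB HR). Local Notation Isum := (P1.Isum HR).
Local Notation Iint := (P1.Iint HR). Local Notation I1 := (P1.I1 HR).
Local Notation PX0 := (P1.PX0 HR). Local Notation PXD := (P1.PXD HR). Local Notation PXm := (P1.PXm HR). Local Notation PXM := (P1.PXM HR).
Local Notation PXN := (P1.PXN HR). Local Notation PXB := (P1.PXB HR). Local Notation PXsum := (P1.PXsum HR). Local Notation PX_P := (P1.PX_P HR).
Local Notation idealR := (P1.idealR HR).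
Local Notation span_ideal := (P2.span_ideal HR). Local Notation span_gen := (P2.span_gen HR). Local Notation mI := (P2.mI HR).
Local Notation m_not1 := (P2.m_not1 HR). Local Notation m_inv := (P2.m_inv HR). Local Notation m_prime := (P2.m_prime HR).
Local Notation m_mul := (P2.m_mul HR). Local Notation m_prod := (P2.m_prod HR).
Local Notation SMPX := (P2.SMPX HR). Local Notation SM0 := (P2.SM0 HR). Local Notation SMD := (P2.SMD HR). Local Notation SMM := (P2.SMM HR).
Local Notation SMN := (P2.SMN HR). Local Notation SMB := (P2.SMB HR). Local Notation SMg := (P2.SMg HR). Local Notation SMsum := (P2.SMsum HR).
Local Notation SM_trans := (P2.SM_trans HR). Local Notation good_trans := (P2.good_trans HR).
Local Notation good_congr := (P2.good_congr HR). Local Notation good_unit := (P2.good_unit HR).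
Local Notation spn := (P2.span R).

Definition mulN (N y : L) := exists r, R r /\ y = N * r.
Definition residues (N : nat) (s : seq L) := (forall t, t \in s -> R t) /\
  forall y, R y -> exists t, t \in s /\ mulN N%:R (y - t).

Lemma keymod (p' : nat) (z : int) :
  (((z %% p'.+1%:Z)%Z)%:~R : L) = z%:~R - p'.+1%:R * ((z %/ p'.+1%:Z)%Z)%:~R.
Proof.
move: (divz_eq z p'.+1%:Z); move: (z %/ p'.+1%:Z)%Z (z %% p'.+1%:Z)%Z => q m ->.
rewrite intrD (intrM _ q); ring.
Qed.

Lemma dep_p p k (x : 'I_k -> L) : prime p -> (\dim (fullv : {vspace L}) < k)%N ->
  exists c : 'I_k -> int, \sum_i (c i)%:~R * x i = 0 /\ exists i, ~~ (p%:Z %| c i)%Z.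
Proof.
move=> hp hk.
pose Q m := pb (exists z : 'I_k -> int, (exists i, z i != 0) /\
   \sum_i (z i)%:~R * x i = 0 /\ (\sum_i `|z i|)%N = m).
have exQ : exists m, Q m.
  have [z [hz0 hz]] := dep_int x hk.
  by exists (\sum_i `|z i|)%N; apply/pbE; exists z.
case: (ex_minnP exQ) => m /pbE [z [[i0 hi0] [hz hm]]] hmin.
exists z; split => //.
apply: NNPP => hall.
have hdiv : forall i, (p%:Z %| z i)%Z.
  by move=> i; apply: NNPP => h; apply: hall; exists i; apply/negP.
pose z' := fun i => (z i %/ p%:Z)%Z.
have ez : forall i, z i = z' i * p%:Z by move=> i; rewrite /z' divzK.
have hz'0 : z' i0 != 0.
  by move: hi0; rewrite ez; apply: contra => /eqP ->; rewrite mul0r.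
have hQ : Q (\sum_i `|z' i|)%N.
  apply/pbE; exists z'; split; first by exists i0.
  split => //.
  have : (p%:R : L) * \sum_i (z' i)%:~R * x i = 0.
    rewrite -[RHS]hz mulr_sumr; apply: eq_bigr => i _; rewrite ez intrM.
    have -> : (((p%:Z)%:~R) : L) = p%:R by [].
    ring.
  by move/eqP; rewrite mulf_eq0 (negbTE (natL_neq0 _ (prime_gt0 hp))) /= => /eqP.
have e2 : (\sum_i `|z i|)%N = (p * \sum_i `|z' i|)%N.
  by rewrite big_distrr /=; apply: eq_bigr => i _; rewrite ez abszM /= mulnC.
have pos : (0 < \sum_i `|z' i|)%N.
  rewrite (bigD1 i0) //=; apply: leq_trans (leq_addr _ _); by rewrite absz_gt0.
have := hmin _ hQ; rewrite -hm e2 leqNgt ltn_Pmull //; exact: prime_gt1.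
Qed.

Lemma resid_prime p : prime p -> exists s, residues p s.
Proof.
case: p => [//|p'] hp.
pose n := \dim (fullv : {vspace L}).
pose indep k (x : 'I_k -> L) := (forall i, R (x i)) /\
  forall c : 'I_k -> int, mulN p'.+1%:R (\sum_i (c i)%:~R * x i) -> forall i, (p'.+1%:Z %| c i)%Z.
pose Qk k := pb (exists x : 'I_k -> L, indep k x).
have ex0 : exists k, Qk k.
  by exists 0%N; apply/pbE; exists (fun _ => 0); split => [i|c _ [] //]; exact: R0.
have ub : forall k, Qk k -> (k <= n)%N.
  move=> k /pbE [x [hx hind]]; rewrite leqNgt; apply/negP => hk.
  have [c [hc [i hi]]] := dep_p x hp hk.
  move: hi; rewrite (hind c) //.
  by exists 0; split; [exact: R0 | rewrite hc mulr0].
case: (ex_maxnP ex0 ub) => k /pbE [x [hxR hind]] hmax.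
exists [seq \sum_i ((f i : nat)%:R : L) * x i | f : {ffun 'I_k -> 'I_p'.+1} <- enum {ffun 'I_k -> 'I_p'.+1}].
split.
  move=> t /mapP [f _ ->]; apply: Rsum => i _; apply: RM; [exact: Rnat | exact: hxR].
move=> y hy.
pose x' := fun i : 'I_k.+1 => if unlift ord_max i is Some j then x j else y.
have hw : forall i : 'I_k, widen_ord (leqnSn k) i = lift ord_max i.
  by move=> i; apply: val_inj; rewrite /= /bump leqNgt ltn_ord.
have hx'w : forall i, x' (widen_ord (leqnSn k) i) = x i.
  by move=> i; rewrite /x' hw liftK.
have hx'm : x' ord_max = y by rewrite /x' unlift_none.
have hnot : ~ indep k.+1 x'.
  by move=> h; have := hmax k.+1 (proj2 (pbE _) (ex_intro _ x' h)); rewrite ltnn.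
have hx'R : forall i, R (x' i) by move=> i; rewrite /x'; case: (unlift ord_max i).
have [c [hcS hci]] : exists c : 'I_k.+1 -> int,
    mulN p'.+1%:R (\sum_i (c i)%:~R * x' i) /\ exists i, ~ (p'.+1%:Z %| c i)%Z.
  apply: NNPP => hn; apply: hnot; split => // c hc i; apply: NNPP => hi; apply: hn.
  by exists c; split => //; exists i.
rewrite big_ord_recr /= hx'm in hcS.
have eS : \sum_(i < k) (c (widen_ord (leqnSn k) i))%:~R * x' (widen_ord (leqnSn k) i) =
          \sum_(i < k) (c (widen_ord (leqnSn k) i))%:~R * x i.
  by apply: eq_bigr => i _; rewrite hx'w.
rewrite eS in hcS.
set S' := \sum_(i < k) (c (widen_ord (leqnSn k) i))%:~R * x i in hcS.
have hpL : (((p'.+1%:Z)%:~R) : L) = p'.+1%:R by [].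
case: (boolP (p'.+1%:Z %| c ord_max)%Z) => hdm.
  exfalso; have [e he] := dvdzP hdm.
  have hS' : mulN p'.+1%:R S'.
    move: hcS => [r [hr er]]; exists (r - e%:~R * y); split.
      by apply: RB => //; apply: RM => //; apply: Rint.
    have -> : S' = (S' + (c ord_max)%:~R * y) - (c ord_max)%:~R * y by ring.
    by rewrite er he intrM hpL; ring.
  have hall := hind (fun i => c (widen_ord (leqnSn k) i)) hS'.
  move: hci => [i hi]; apply: hi.
  case: (unliftP ord_max i) => [j ->|->] //.
  by rewrite -hw; exact: hall j.
have hcop : coprimez p'.+1 (c ord_max).
  by rewrite coprimezE /= prime_coprime //; rewrite dvdzE in hdm.
have [[u v] /= huv] := coprimezP _ _ hcop.
move: hcS => [r [hr er]].
pose b := fun i : 'I_k => (- v * c (widen_ord (leqnSn k) i))%R.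
have eb : \sum_i (b i)%:~R * x i = - v%:~R * S'.
  rewrite /S' mulr_sumr; apply: eq_bigr => i _; rewrite /b intrM intrN; ring.
have ecy : (c ord_max)%:~R * y = p'.+1%:R * r - S' by rewrite -er; ring.
have ey : y - \sum_i (b i)%:~R * x i = p'.+1%:R * (u%:~R * y + v%:~R * r).
  rewrite eb; apply/eqP; rewrite -subr_eq0; apply/eqP.
  have -> : y - - v%:~R * S' - p'.+1%:R * (u%:~R * y + v%:~R * r) =
     (1 - (u * p'.+1%:Z + v * c ord_max)%:~R) * y +
     v%:~R * ((c ord_max)%:~R * y - (p'.+1%:R * r - S')).
    rewrite intrD !intrM hpL; ring.
  by rewrite huv ecy !subrr mul0r mulr0 addr0.
pose m := fun i => (b i %% p'.+1%:Z)%Z.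
have hm0 : forall i, 0 <= m i by move=> i; apply: modz_ge0.
have hmlt : forall i, (`|m i| < p'.+1)%N.
  move=> i; have := ltz_pmod (b i) (isT : 0 < p'.+1%:Z).
  by rewrite -/(m i) -(gez0_abs (hm0 i)) ltz_nat.
pose f := [ffun i => (inord `|m i| : 'I_p'.+1)].
have hf : forall i, ((f i : nat)%:R : L) = (m i)%:~R.
  move=> i; rewrite ffunE inordK ?hmlt //.
  by rewrite -[in RHS](gez0_abs (hm0 i)).
exists (\sum_i ((f i : nat)%:R : L) * x i); split.
  by apply: map_f; rewrite mem_enum.
have et : \sum_i ((f i : nat)%:R : L) * x i =
   \sum_i (b i)%:~R * x i - p'.+1%:R * \sum_i ((b i %/ p'.+1%:Z)%Z)%:~R * x i.
  rewrite mulr_sumr -sumrB; apply: eq_bigr => i _; rewrite hf /m keymod; ring.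
exists (u%:~R * y + v%:~R * r + \sum_i ((b i %/ p'.+1%:Z)%Z)%:~R * x i); split.
  apply: RD; first by apply: RD; apply: RM => //; apply: Rint.
  by apply: Rsum => i _; apply: RM; [apply: Rint | apply: hxR].
rewrite et.
have -> : y - (\sum_i (b i)%:~R * x i - p'.+1%:R * \sum_i ((b i %/ p'.+1%:Z)%Z)%:~R * x i) =
   (y - \sum_i (b i)%:~R * x i) + p'.+1%:R * \sum_i ((b i %/ p'.+1%:Z)%Z)%:~R * x i by ring.
rewrite ey; ring.
Qed.

Lemma resid N : (0 < N)%N -> exists s, residues N s.
Proof.
elim/ltn_ind: N => N ih hN.
case: (leqP N 1) => hN1.
  have -> : N = 1%N by apply/eqP; rewrite eqn_leq hN1 hN.
  exists [:: 0]; split; first by move=> t; rewrite inE => /eqP ->; exact: R0.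
  by move=> y hy; exists 0; split; [rewrite inE | exists y; split => //; rewrite subr0 mul1r].
have hp := pdiv_prime hN1.
set p := pdiv N in hp.
have hM : (N %/ p < N)%N by apply: ltn_Pdiv => //; exact: prime_gt1.
have hM0 : (0 < N %/ p)%N by rewrite divn_gt0 ?prime_gt0 //; apply: dvdn_leq => //; exact: pdiv_dvd.
have eN : N = (N %/ p * p)%N by rewrite divnK //; exact: pdiv_dvd.
have [sp [hsp1 hsp2]] := resid_prime hp.
have [sM [hsM1 hsM2]] := ih _ hM hM0.
exists [seq t + p%:R * t' | t <- sp, t' <- sM]; split.
  move=> z /allpairsP [[t t'] [/= ht ht' ->]].
  by apply: RD; [exact: hsp1 | apply: RM; [exact: Rnat | exact: hsM1]].
move=> y hy; have [t [ht [r [hr er]]]] := hsp2 y hy.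
have [t' [ht' [r' [hr' er']]]] := hsM2 r hr.
exists (t + p%:R * t'); split; first exact: (allpairs_f (fun a b => a + p%:R * b) ht ht').
exists r'; split => //.
rewrite [in LHS](_ : y = t + p%:R * r); last by rewrite -er; ring.
rewrite (_ : r = t' + (N %/ p)%:R * r'); last by rewrite -er'; ring.
have eNL : (N%:R : L) = (N %/ p)%:R * p%:R by rewrite {1}eN natrM.
rewrite eNL; ring.
Qed.

End Five.

End P5.
Import P5.

Module P6.

Lemma count_lt (T : eqType) (a b : pred T) (s : seq T) t :
  (forall x, a x -> b x) -> t \in s -> b t -> ~~ a t -> (count a s < count b s)%N.
Proof.
move=> hab; elim: s => [//|x s ih]; rewrite inE => /orP [/eqP <-|hts] hbt hat /=.
  by rewrite (negbTE hat) hbt add0n add1n ltnS; apply: sub_count => y; apply: hab.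
rewrite -addnS; apply: leq_add; last exact: ih.
by case ha: (a x) => //; rewrite (hab x ha).
Qed.

Section Six.
Variable L : fieldExtType rat.
Variable R : L -> Prop.
Hypothesis HR : is_subring R.
Local Notation R0 := (P1.R0 HR). Local Notation R1 := (P1.R1 HR). Local Notation RB := (P1.RB HR). Local Notation RM := (P1.RM HR).
Local Notation RN := (P1.RN HR). Local Notation RD := (P1.RD HR). Local Notation Rsum := (P1.Rsum HR). Local Notation Rnat := (P1.Rnat HR).
Local Notation Rint := (P1.Rint HR). Local Notation RX := (P1.RX HR).
Local Notation Isub := (P1.Isub HR). Local Notation I0 := (P1.I0 HR). Local Notation ID := (P1.ID HR). Local Notation IM := (P1.IM HR).
Local Notation IMr := (P1.IMr HR). Local Notation IN := (P1.IN HR). Local Notation IB := (P1.IB HR). Local Notation Isum := (P1.Isum HR).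
Local Notation Iint := (P1.Iint HR). Local Notation I1 := (P1.I1 HR).
Local Notation PX0 := (P1.PX0 HR). Local Notation PXD := (P1.PXD HR). Local Notation PXm := (P1.PXm HR). Local Notation PXM := (P1.PXM HR).
Local Notation PXN := (P1.PXN HR). Local Notation PXB := (P1.PXB HR). Local Notation PXsum := (P1.PXsum HR). Local Notation PX_P := (P1.PX_P HR).
Local Notation idealR := (P1.idealR HR).
Local Notation span_ideal := (P2.span_ideal HR). Local Notation span_gen := (P2.span_gen HR). Local Notation mI := (P2.mI HR).
Local Notation m_not1 := (P2.m_not1 HR). Local Notation m_inv := (P2.m_inv HR). Local Notation m_prime := (P2.m_prime HR).
Local Notation m_mul := (P2.m_mul HR). Local Notation m_prod := (P2.m_prod HR).
Local Notation SMPX := (P2.SMPX HR). Local Notation SM0 := (P2.SM0 HR). Local Notation SMD := (P2.SMD HR). Local Notation SMM := (P2.SMM HR).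
Local Notation SMN := (P2.SMN HR). Local Notation SMB := (P2.SMB HR). Local Notation SMg := (P2.SMg HR). Local Notation SMsum := (P2.SMsum HR).
Local Notation SM_trans := (P2.SM_trans HR). Local Notation good_trans := (P2.good_trans HR).
Local Notation good_congr := (P2.good_congr HR). Local Notation good_unit := (P2.good_unit HR).
Local Notation spn := (P2.span R).
Local Notation exchange := (P3.exchange HR).
Local Notation nakayama := (P3.nakayama HR).
Local Notation stepB := (P4.stepB HR).
Local Notation resid := (P5.resid HR).
Local Notation residues := (P5.residues R).
Local Notation mulN := (P5.mulN R).

Lemma max_exists (C : L -> Prop) (N : nat) : is_ideal R C -> (0 < N)%N -> C N%:R -> ~ C 1 ->
  exists P, is_maximal_ideal R P /\ forall x, C x -> P x.
Proof.
move=> hC hN hCN hC1.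
have [s [hs1 hs2]] := resid hN.
pose ok (K : L -> Prop) := is_ideal R K /\ (forall x, C x -> K x) /\ ~ K 1.
pose cnt (K : L -> Prop) := count (fun t => pb (K t)) s.
pose Q m := pb (exists K, ok K /\ cnt K = m).
have ex : exists m, Q m by exists (cnt C); apply/pbE; exists C; split.
have ub : forall m, Q m -> (m <= size s)%N.
  by move=> m /pbE [K [_ <-]]; apply: count_size.
case: (ex_maxnP ex ub) => m /pbE [K [[hK [hCK hK1]] hcnt]] hmax.
exists K; split => //.
split => //; split; first by exists 1; split => //; exact: R1.
move=> J hJ hKJ.
case: (classic (J 1)) => hJ1.
  by right => x hx; apply: (I1 hJ hJ1).
left => x hJx; apply: NNPP => hKx.
have hxR : R x := Isub hJ hJx.
have [t [ht [r [hr er]]]] := hs2 x hxR.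
have hNK : K N%:R := hCK _ hCN.
have htJ : J t.
  have -> : t = x - (x - t) by ring.
  by rewrite er; apply: (IB hJ hJx); apply: (IMr hJ hr (hKJ _ hNK)).
have htK : ~ K t.
  move=> h; apply: hKx; have -> : x = t + (x - t) by ring.
  by rewrite er; apply: (ID hK h); apply: (IMr hK hr hNK).
have hlt : (cnt K < cnt J)%N.
  apply: (count_lt (t := t)) => //.
  - by move=> y /pbE hy; apply/pbE; apply: hKJ.
  - by apply/pbE.
  - by apply/negP => /pbE.
have okJ : ok J by split => //; split => // y hy; apply: hKJ; apply: hCK.
have := hmax (cnt J) (proj2 (pbE _) (ex_intro _ J (conj okJ erefl))).
by rewrite -hcnt leqNgt hlt.
Qed.

Lemma fg I N : is_ideal R I -> (0 < N)%N -> I N%:R ->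
  exists k (f : 'I_k -> L), (forall i, I (f i)) /\ forall x, I x -> spn f x.
Proof.
move=> hI hN hIN.
have [s [hs1 hs2]] := resid hN.
pose gens := N%:R :: filter (fun t => pb (I t)) s.
exists (size gens), (fun i => nth 0 gens i); split.
  move=> i; have := mem_nth 0 (ltn_ord i); rewrite inE => /orP [/eqP ->//|].
  by rewrite mem_filter => /andP [/pbE].
move=> x hx.
have [t [ht [r [hr er]]]] := hs2 x (Isub hI hx).
have hIt : I t.
  have -> : t = x - (x - t) by ring.
  by rewrite er; apply: (IB hI hx); apply: (IMr hI hr hIN).
have htg : t \in gens by rewrite inE mem_filter ht andbT; apply/orP; right; apply/pbE.
pose iN : 'I_(size gens) := Ordinal (isT : (0 < size gens)%N).
have hit : (index t gens < size gens)%N by rewrite index_mem.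
pose it : 'I_(size gens) := Ordinal hit.
exists (fun i => (i == iN)%:R * r + (i == it)%:R); split.
  by move=> i; apply: RD; [apply: RM; [exact: Rnat | exact: hr] | exact: Rnat].
have e : \sum_i ((i == iN)%:R * r + (i == it)%:R) * nth 0 gens i =
   \sum_i (i == iN)%:R * (r * nth 0 gens i) + \sum_i (i == it)%:R * nth 0 gens i.
  by rewrite -big_split /=; apply: eq_bigr => i _; ring.
rewrite e !(sum_delta HR) /= nth_index //.
have -> : x = t + (x - t) by ring.
by rewrite er; ring.
Qed.

End Six.

End P6.
Import P6.

Module P7.
Section Seven.
Variable L : fieldExtType rat.
Variable R : L -> Prop.
Hypothesis HR : is_subring R.
Local Notation R0 := (P1.R0 HR). Local Notation R1 := (P1.R1 HR). Local Notation RB := (P1.RB HR). Local Notation RM := (P1.RM HR).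
Local Notation RN := (P1.RN HR). Local Notation RD := (P1.RD HR). Local Notation Rsum := (P1.Rsum HR). Local Notation Rnat := (P1.Rnat HR).
Local Notation Rint := (P1.Rint HR). Local Notation RX := (P1.RX HR).
Local Notation Isub := (P1.Isub HR). Local Notation I0 := (P1.I0 HR). Local Notation ID := (P1.ID HR). Local Notation IM := (P1.IM HR).
Local Notation IMr := (P1.IMr HR). Local Notation IN := (P1.IN HR). Local Notation IB := (P1.IB HR). Local Notation Isum := (P1.Isum HR).
Local Notation Iint := (P1.Iint HR). Local Notation I1 := (P1.I1 HR).
Local Notation PX0 := (P1.PX0 HR). Local Notation PXD := (P1.PXD HR). Local Notation PXm := (P1.PXm HR). Local Notation PXM := (P1.PXM HR).
Local Notation PXN := (P1.PXN HR). Local Notation PXB := (P1.PXB HR). Local Notation PXsum := (P1.PXsum HR). Local Notation PX_P := (P1.PX_P HR).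
Local Notation idealR := (P1.idealR HR).
Local Notation span_ideal := (P2.span_ideal HR). Local Notation span_gen := (P2.span_gen HR). Local Notation mI := (P2.mI HR).
Local Notation m_not1 := (P2.m_not1 HR). Local Notation m_inv := (P2.m_inv HR). Local Notation m_prime := (P2.m_prime HR).
Local Notation m_mul := (P2.m_mul HR). Local Notation m_prod := (P2.m_prod HR).
Local Notation SMPX := (P2.SMPX HR). Local Notation SM0 := (P2.SM0 HR). Local Notation SMD := (P2.SMD HR). Local Notation SMM := (P2.SMM HR).
Local Notation SMN := (P2.SMN HR). Local Notation SMB := (P2.SMB HR). Local Notation SMg := (P2.SMg HR). Local Notation SMsum := (P2.SMsum HR).
Local Notation SM_trans := (P2.SM_trans HR). Local Notation good_trans := (P2.good_trans HR).
Local Notation good_congr := (P2.good_congr HR). Local Notation good_unit := (P2.good_unit HR).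
Local Notation spn := (P2.span R).
Local Notation exchange := (P3.exchange HR).
Local Notation nakayama := (P3.nakayama HR).
Local Notation stepB := (P4.stepB HR).
Local Notation resid := (P5.resid HR).
Local Notation residues := (P5.residues R).
Local Notation mulN := (P5.mulN R).

Lemma code_sub s N (P Q : L -> Prop) : residues N s -> is_maximal_ideal R P ->
  P N%:R -> Q N%:R -> is_ideal R Q ->
  (forall i : 'I_(size s), pb (P (nth 0 s i)) = pb (Q (nth 0 s i))) ->
  forall x, P x -> Q x.
Proof.
move=> [hs1 hs2] hP hPN hQN hQ hc x hx.
have hPi := mI hP.
have [t [ht [r [hr er]]]] := hs2 x (Isub hPi hx).
have hPt : P t.
  have -> : t = x - (x - t) by ring.
  by rewrite er; apply: (IB hPi hx); apply: (IMr hPi hr hPN).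
have hit : (index t s < size s)%N by rewrite index_mem.
have := hc (Ordinal hit); rewrite /= nth_index // => e.
have hQt : Q t by apply/pbE; rewrite -e; apply/pbE.
have -> : x = t + (x - t) by ring.
by rewrite er; apply: (ID hQ hQt); apply: (IMr hQ hr hQN).
Qed.

Lemma code_eq s N (P Q : L -> Prop) : residues N s -> is_maximal_ideal R P ->
  is_maximal_ideal R Q -> P N%:R -> Q N%:R ->
  (forall i : 'I_(size s), pb (P (nth 0 s i)) = pb (Q (nth 0 s i))) -> P = Q.
Proof.
move=> hs hP hQ hPN hQN hc.
apply: functional_extensionality => x; apply: propositional_extensionality; split.
  exact: (code_sub hs hP hPN hQN (mI hQ) hc).
by apply: (code_sub hs hQ hQN hPN (mI hP)) => i; rewrite hc.
Qed.

Lemma Rprod (T : Type) (r : seq T) (Pr : pred T) (F : T -> L) : (forall i, R (F i)) -> R (\prod_(i <- r | Pr i) F i).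
Proof. by move=> h; apply: (big_ind R R1 RM) => i _; apply: h. Qed.

Lemma crt (N : nat) (S : (L -> Prop) -> Prop) (X : L -> Prop) (v : (L -> Prop) -> L) :
  (0 < N)%N -> is_ideal R X -> (forall P, S P -> X (v P)) ->
  exists f, X f /\ forall P, is_maximal_ideal R P -> P N%:R -> S P -> PX P X (f - v P).
Proof.
move=> hN hX hv.
have [s hs] := resid hN.
pose T := {ffun 'I_(size s) -> bool}.
pose code (P : L -> Prop) : T := [ffun i : 'I_(size s) => pb (P (nth 0 s i))].
pose G P := is_maximal_ideal R P /\ P N%:R /\ S P.
pose has (m : T) := exists Q, G Q /\ code Q = m.
have hrep : forall m : T, exists P, has m -> G P /\ code P = m.
  move=> m; case: (classic (has m)) => [[Q hQ]|hn]; first by exists Q.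
  by exists (fun _ => False).
have [rep hrep'] := fchoice hrep.
have reprep : forall P, G P -> rep (code P) = P.
  move=> P hGP; have [[hQ [hQN _]] hc] := hrep' (code P) (ex_intro _ P (conj hGP erefl)).
  case: hGP => hP [hPN _].
  apply: (code_eq hs hQ hP hQN hPN) => i.
  by move/ffunP: hc => /(_ i); rewrite !ffunE.
have hsep : forall m m' : T, exists y, has m -> has m' -> m != m' ->
    R y /\ rep m' y /\ ~ rep m y.
  move=> m m'.
  case: (classic (has m /\ has m' /\ m != m')) => [[hm [hm' hne]]|hn]; last first.
    by exists 0 => a b c; exfalso; apply: hn.
  have [[hPm [hPmN _]] hcm] := hrep' m hm.
  have [[hPm' [hPm'N _]] hcm'] := hrep' m' hm'.
  case: (classic (exists y, rep m' y /\ ~ rep m y)) => [[y [hy1 hy2]]|hn].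
    by exists y => _ _ _; split => //; exact: (Isub (mI hPm') hy1).
  exfalso.
  have hsub : forall y, rep m' y -> rep m y.
    by move=> y hy; apply: NNPP => hny; apply: hn; exists y.
  move: (hPm') => [_ [_ hmax]].
  case: (hmax (rep m) (mI hPm) hsub) => [hsub2|hall].
    have eq : rep m = rep m'.
      apply: functional_extensionality => x; apply: propositional_extensionality.
      by split; [apply: hsub2 | apply: hsub].
    by move/eqP: hne; apply; rewrite -hcm -hcm' eq.
  exact: (m_not1 hPm (hall 1 R1)).
have [Y hY] : exists Y : T -> T -> L, forall m m', has m -> has m' -> m != m' ->
    R (Y m m') /\ rep m' (Y m m') /\ ~ rep m (Y m m').
  have h2 : forall m, exists Ym : T -> L, forall m', has m -> has m' -> m != m' ->
      R (Ym m') /\ rep m' (Ym m') /\ ~ rep m (Ym m').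
    by move=> m; apply: fchoice (hsep m).
  have [Y hY] := fchoice h2; by exists Y.
pose hasb m := pb (has m).
pose F m m' := if hasb m' && (m' != m) then Y m m' else 1.
pose z m := \prod_(m' : T) F m m'.
have hz : forall m, has m -> R (z m) /\ ~ rep m (z m) /\ forall m', has m' -> m' != m -> rep m' (z m).
  move=> m hm; have [[hPm _] _] := hrep' m hm.
  have hF : forall m', R (F m m') /\ ~ rep m (F m m').
    move=> m'; rewrite /F; case: ifP => [/andP [/pbE hm' hne]|_].
      by have [h1 [_ h3]] := hY m m' hm hm' ltac:(by rewrite eq_sym).
    by split; [exact: R1 | exact: (m_not1 hPm)].
  have [hzR hzP] := m_prod hPm (index_enum T) hF.
  split => //; split => // m' hm' hne.
  have [[hPm' _] _] := hrep' m' hm'.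
  rewrite /z (bigD1 m') //=.
  apply: (IMr (mI hPm')); first by apply: Rprod => i; case: (hF i).
  rewrite /F; have -> : hasb m' && (m' != m) by apply/andP; split => //; apply/pbE.
  by have [_ [h2 _]] := hY m m' hm hm' ltac:(by rewrite eq_sym).
have hu : forall m, exists u, has m -> R u /\ rep m (u * z m - 1).
  move=> m; case: (classic (has m)) => [hm|hn]; last by exists 0.
  have [[hPm _] _] := hrep' m hm; have [hzR [hzP _]] := hz m hm.
  have [u hu] := m_inv hPm hzR hzP; by exists u.
have [U hU] := fchoice hu.
exists (\sum_(m | hasb m) (U m * z m) * v (rep m)); split.
  apply: (Isum hX) => m /pbE hm.
  have [[hPm [_ hSm]] _] := hrep' m hm; have [hzR _] := hz m hm; have [hUR _] := hU m hm.
  exact: (IM hX (RM hUR hzR) (hv _ hSm)).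
move=> P hP hPN hSP.
have hGP : G P by split => //; split.
have hm0 : has (code P) by exists P; split.
have hrP := reprep P hGP.
have hPi := mI hP.
rewrite (bigD1 (code P)) /=; last by apply/pbE.
set Sg := \sum_(i | hasb i && (i != code P)) U i * z i * v (rep i).
have -> : U (code P) * z (code P) * v (rep (code P)) + Sg - v P =
    (U (code P) * z (code P) - 1) * v P + Sg by rewrite hrP; ring.
apply: (PXD hPi hX).
  apply: (PXm hPi hX); last exact: hv.
  by have := (hU _ hm0).2; rewrite hrP.
apply: (PXsum hPi hX) => m /andP [/pbE hm hne].
have [[_ [_ hSm]] _] := hrep' m hm.
apply: (PXm hPi hX); last exact: hv.
have [hUR _] := hU m hm.
have [_ [_ hz3]] := hz m hm.
apply: (IM hPi hUR); rewrite -hrP; apply: hz3 => //; by rewrite eq_sym.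
Qed.

End Seven.

End P7.
Import P7.

Module P8.
Section Eight.
Variable L : fieldExtType rat.
Variable R : L -> Prop.
Hypothesis HR : is_subring R.
Local Notation R0 := (P1.R0 HR). Local Notation R1 := (P1.R1 HR). Local Notation RB := (P1.RB HR). Local Notation RM := (P1.RM HR).
Local Notation RN := (P1.RN HR). Local Notation RD := (P1.RD HR). Local Notation Rsum := (P1.Rsum HR). Local Notation Rnat := (P1.Rnat HR).
Local Notation Rint := (P1.Rint HR). Local Notation RX := (P1.RX HR).
Local Notation Isub := (P1.Isub HR). Local Notation I0 := (P1.I0 HR). Local Notation ID := (P1.ID HR). Local Notation IM := (P1.IM HR).
Local Notation IMr := (P1.IMr HR). Local Notation IN := (P1.IN HR). Local Notation IB := (P1.IB HR). Local Notation Isum := (P1.Isum HR).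
Local Notation Iint := (P1.Iint HR). Local Notation I1 := (P1.I1 HR).
Local Notation PX0 := (P1.PX0 HR). Local Notation PXD := (P1.PXD HR). Local Notation PXm := (P1.PXm HR). Local Notation PXM := (P1.PXM HR).
Local Notation PXN := (P1.PXN HR). Local Notation PXB := (P1.PXB HR). Local Notation PXsum := (P1.PXsum HR). Local Notation PX_P := (P1.PX_P HR).
Local Notation idealR := (P1.idealR HR).
Local Notation span_ideal := (P2.span_ideal HR). Local Notation span_gen := (P2.span_gen HR). Local Notation mI := (P2.mI HR).
Local Notation m_not1 := (P2.m_not1 HR). Local Notation m_inv := (P2.m_inv HR). Local Notation m_prime := (P2.m_prime HR).
Local Notation m_mul := (P2.m_mul HR). Local Notation m_prod := (P2.m_prod HR).
Local Notation SMPX := (P2.SMPX HR). Local Notation SM0 := (P2.SM0 HR). Local Notation SMD := (P2.SMD HR). Local Notation SMM := (P2.SMM HR).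
Local Notation SMN := (P2.SMN HR). Local Notation SMB := (P2.SMB HR). Local Notation SMg := (P2.SMg HR). Local Notation SMsum := (P2.SMsum HR).
Local Notation SM_trans := (P2.SM_trans HR). Local Notation good_trans := (P2.good_trans HR).
Local Notation good_congr := (P2.good_congr HR). Local Notation good_unit := (P2.good_unit HR).
Local Notation spn := (P2.span R).
Local Notation exchange := (P3.exchange HR).
Local Notation nakayama := (P3.nakayama HR).
Local Notation stepB := (P4.stepB HR).
Local Notation resid := (P5.resid HR).
Local Notation residues := (P5.residues R).
Local Notation mulN := (P5.mulN R).
Local Notation max_exists := (P6.max_exists HR).
Local Notation fg := (P6.fg HR).
Local Notation crt := (P7.crt HR).

Lemma nzP P s : is_maximal_ideal R P -> ~ P s -> s != 0.
Proof. by move=> hP hs; apply/eqP => e; apply: hs; rewrite e; exact: (I0 (mI hP)). Qed.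

Lemma loc_to_good P I d : is_maximal_ideal R P -> is_ideal R I ->
  generated_by (localization R P) (loc_ideal R P I) d ->
  exists h : 'I_d -> L, (forall j, I (h j)) /\ good R P I h.
Proof.
move=> hP hI [g [hgI hgen]].
have hPi := mI hP.
have : forall j, exists pr : L * L, I pr.1 /\ R pr.2 /\ ~ P pr.2 /\ g j = pr.1 / pr.2.
  by move=> j; have [i [s hh]] := hgI j; exists (i, s).
move/fchoice => [gi hgi].
exists (fun j => (gi j).1); split; first by move=> j; case: (hgi j).
move=> x hx.
have hxl : loc_ideal R P I x.
  exists x, 1; split => //; split; [exact: R1 | split; [exact: (m_not1 hP) | by rewrite divr1]].
have [a [ha ex]] := (hgen x).1 hxl.
have : forall j, exists pr : L * L, R pr.1 /\ R pr.2 /\ ~ P pr.2 /\ a j = pr.1 / pr.2.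
  by move=> j; have [r [t hh]] := ha j; exists (r, t).
move/fchoice => [rt hat].
pose q := fun j => (rt j).2 * (gi j).2.
have hq : forall j, R (q j) /\ ~ P (q j).
  move=> j; have [_ [ht [hnt _]]] := hat j; have [_ [hs [hns _]]] := hgi j.
  by split; [exact: RM | exact: m_mul].
have [hDR hDP] := m_prod hP (index_enum 'I_d) hq.
have [u [hu hu1]] := m_inv hP hDR hDP.
pose cc := fun j => u * ((rt j).1 * \prod_(k | k != j) q k).
exists cc; split.
  move=> j; apply: RM => //; apply: RM; first by case: (hat j).
  by apply: (big_ind R R1 RM) => k _; case: (hq k).
have eD : (\prod_(j <- index_enum 'I_d) q j) * x =
     \sum_j ((rt j).1 * \prod_(k | k != j) q k) * (gi j).1.
  rewrite ex mulr_sumr; apply: eq_bigr => j _.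
  have [_ [_ [hnt eaj]]] := hat j; have [_ [_ [hns egj]]] := hgi j.
  rewrite eaj egj [in LHS](bigD1 j) //= /q.
  by field; rewrite ?(nzP hP hnt) ?(nzP hP hns).
have -> : x - \sum_l cc l * (gi l).1 = - ((u * (\prod_(j <- index_enum 'I_d) q j) - 1) * x).
  have -> : \sum_l cc l * (gi l).1 = u * ((\prod_(j <- index_enum 'I_d) q j) * x).
    by rewrite eD mulr_sumr; apply: eq_bigr => l _; rewrite /cc; ring.
  ring.
by apply: (PXN hPi hI); apply: (PXm hPi hI).
Qed.

Lemma gen_to_loc P I d : is_maximal_ideal R P -> is_ideal R I -> generated_by R I d ->
  generated_by (localization R P) (loc_ideal R P I) d.
Proof.
move=> hP hI [g [hgI hgen]].
have hPi := mI hP.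
exists g; split.
  move=> j; exists (g j), 1; split => //.
  by split; [exact: R1 | split; [exact: (m_not1 hP) | by rewrite divr1]].
move=> x; split.
  move=> [i [s [hi [hs [hns ->]]]]].
  have [a [ha ei]] := (hgen i).1 hi.
  exists (fun j => a j / s); split; first by move=> j; exists (a j), s.
  by rewrite ei mulr_suml; apply: eq_bigr => j _; ring.
move=> [a [ha ex]].
have : forall j, exists pr : L * L, R pr.1 /\ R pr.2 /\ ~ P pr.2 /\ a j = pr.1 / pr.2.
  by move=> j; have [r [t hh]] := ha j; exists (r, t).
move/fchoice => [rt hat].
have ht : forall j, R (rt j).2 /\ ~ P (rt j).2 by move=> j; case: (hat j) => _ [? [? _]].
have [hDR hDP] := m_prod hP (index_enum 'I_d) ht.
exists (\sum_j ((rt j).1 * \prod_(k | k != j) (rt k).2) * g j), (\prod_(j <- index_enum 'I_d) (rt j).2).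
split.
  apply: (Isum hI) => j _; apply: (IM hI) => //; apply: RM; first by case: (hat j).
  by apply: (big_ind R R1 RM) => k _; case: (ht k).
split => //; split => //.
rewrite ex mulr_suml; apply: eq_bigr => j _.
have [_ [_ [hnt eaj]]] := hat j.
have hp' : \prod_(k | k != j) (rt k).2 != 0.
  by apply/prodf_neq0 => k _; apply: (nzP hP); case: (ht k).
rewrite eaj [X in _ = _ / X](bigD1 j) //=.
by field; rewrite ?(nzP hP hnt) ?hp'.
Qed.

End Eight.

End P8.
Import P8.

Module P9.
Section Nine.
Variable L : fieldExtType rat.
Variable R : L -> Prop.
Hypothesis HR : is_subring R.
Local Notation R0 := (P1.R0 HR). Local Notation R1 := (P1.R1 HR). Local Notation RB := (P1.RB HR). Local Notation RM := (P1.RM HR).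
Local Notation RN := (P1.RN HR). Local Notation RD := (P1.RD HR). Local Notation Rsum := (P1.Rsum HR). Local Notation Rnat := (P1.Rnat HR).
Local Notation Rint := (P1.Rint HR). Local Notation RX := (P1.RX HR).
Local Notation Isub := (P1.Isub HR). Local Notation I0 := (P1.I0 HR). Local Notation ID := (P1.ID HR). Local Notation IM := (P1.IM HR).
Local Notation IMr := (P1.IMr HR). Local Notation IN := (P1.IN HR). Local Notation IB := (P1.IB HR). Local Notation Isum := (P1.Isum HR).
Local Notation Iint := (P1.Iint HR). Local Notation I1 := (P1.I1 HR).
Local Notation PX0 := (P1.PX0 HR). Local Notation PXD := (P1.PXD HR). Local Notation PXm := (P1.PXm HR). Local Notation PXM := (P1.PXM HR).
Local Notation PXN := (P1.PXN HR). Local Notation PXB := (P1.PXB HR). Local Notation PXsum := (P1.PXsum HR). Local Notation PX_P := (P1.PX_P HR).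
Local Notation idealR := (P1.idealR HR).
Local Notation span_ideal := (P2.span_ideal HR). Local Notation span_gen := (P2.span_gen HR). Local Notation mI := (P2.mI HR).
Local Notation m_not1 := (P2.m_not1 HR). Local Notation m_inv := (P2.m_inv HR). Local Notation m_prime := (P2.m_prime HR).
Local Notation m_mul := (P2.m_mul HR). Local Notation m_prod := (P2.m_prod HR).
Local Notation SMPX := (P2.SMPX HR). Local Notation SM0 := (P2.SM0 HR). Local Notation SMD := (P2.SMD HR). Local Notation SMM := (P2.SMM HR).
Local Notation SMN := (P2.SMN HR). Local Notation SMB := (P2.SMB HR). Local Notation SMg := (P2.SMg HR). Local Notation SMsum := (P2.SMsum HR).
Local Notation SM_trans := (P2.SM_trans HR). Local Notation good_trans := (P2.good_trans HR).
Local Notation good_congr := (P2.good_congr HR). Local Notation good_unit := (P2.good_unit HR).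
Local Notation spn := (P2.span R).
Local Notation exchange := (P3.exchange HR).
Local Notation nakayama := (P3.nakayama HR).
Local Notation stepB := (P4.stepB HR).
Local Notation resid := (P5.resid HR).
Local Notation residues := (P5.residues R).
Local Notation mulN := (P5.mulN R).
Local Notation max_exists := (P6.max_exists HR).
Local Notation fg := (P6.fg HR).
Local Notation crt := (P7.crt HR).
Local Notation loc_to_good := (P8.loc_to_good HR).
Local Notation gen_to_loc := (P8.gen_to_loc HR).

Lemma hard I d : is_ideal R I -> (2 <= d)%N ->
  (forall P, is_maximal_ideal R P -> exists h : 'I_d -> L, (forall j, I (h j)) /\ good R P I h) ->
  exists g : 'I_d -> L, (forall j, I (g j)) /\ forall x, I x <-> spn g x.
Proof.
move=> hI hd hloc.
have back : forall g : 'I_d -> L, (forall j, I (g j)) -> forall x, spn g x -> I x.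
  by move=> g hg x [a [ha ->]]; apply: (Isum hI) => j _; exact: (IM hI (ha j) (hg j)).
case: (classic (exists a, I a /\ a != 0)) => [[a [ha ha0]]|hzero]; last first.
  exists (fun _ => 0); split; first by move=> j; exact: (I0 hI).
  move=> x; split; last by apply: back => j; exact: (I0 hI).
  move=> hx; have x0 : x = 0.
    by apply: NNPP => hx0; apply: hzero; exists x; split => //; apply/eqP.
  exists (fun _ => 0); split; first by move=> j; exact: R0.
  by rewrite x0 big1 // => j _; rewrite mulr0.
have [N [hN [r0 [hr0 eN]]]] := stepB (Isub hI ha) ha0.
have hNI : I N%:R by rewrite eN; exact: (IMr hI hr0 ha).
have hNR : R N%:R := Rnat N.
have hN0 : (N%:R : L) != 0 := natL_neq0 L hN.
have [kf [fI [hfI hfsp]]] := fg hI hN hNI.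
pose MP P := is_maximal_ideal R P /\ P N%:R.
have hy : forall P, exists y, MP P -> I y /\ ~ PX P I y.
  move=> P; case: (classic (MP P)) => [[hP hPN]|hn]; last by exists 0.
  apply: NNPP => hne.
  have hall : forall y, I y -> PX P I y.
    by move=> y hy; apply: NNPP => hny; apply: hne; exists y.
  have hJ0 : is_ideal R (fun x => x = 0).
    split; first by move=> x ->; exact: R0.
    split => //; split; first by move=> x y -> ->; rewrite addr0.
    by move=> r x _ ->; rewrite mulr0.
  have hloc0 : forall x, I x -> exists j, j = 0 /\ PX P I (x - j).
    by move=> x hx; exists 0; split => //; rewrite subr0; apply: hall.
  have [t [ht [hnt ht0]]] := nakayama hP hI hJ0 hfI hfsp hloc0 hNI.
  move/eqP: ht0; rewrite mulf_eq0 (negbTE hN0) orbF => /eqP t0.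
  by apply: hnt; rewrite t0; exact: (I0 (mI hP)).
have [yP hyP] := fchoice hy.
have [g1c [hg1cI hg1c]] := crt (S := MP) (v := yP) hN hI (fun P hP => (hyP P hP).1).
pose N2 := (N%:R : L) * N%:R.
have hN2I : I N2 by exact: (IM hI hNR hNI).
have hN20 : N2 != 0 by rewrite mulf_neq0.
pose g1 := if g1c == 0 then N2 else g1c.
have hg1I : I g1 by rewrite /g1; case: ifP.
have hg10 : g1 != 0 by rewrite /g1; case: ifP => // /negbT.
have hg1P : forall P, is_maximal_ideal R P -> P N%:R -> ~ PX P I g1.
  move=> P hP hPN hpx.
  have hPi := mI hP.
  have c1 := hg1c P hP hPN (conj hP hPN).
  have c2 : PX P I (g1 - g1c).
    rewrite /g1; case: ifP => [/eqP ->|_]; last by rewrite subrr; apply: PX0.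
    by rewrite subr0; apply: (PXm hPi hI).
  have [_ hny] := hyP P (conj hP hPN).
  apply: hny.
  have -> : yP P = g1 - (g1 - g1c) - (g1c - yP P) by ring.
  by apply: (PXB hPi hI) => //; apply: (PXB hPi hI).
have hd0 : (0 < d)%N by apply: leq_trans hd.
pose i0 : 'I_d := Ordinal hd0.
pose i1 : 'I_d := Ordinal hd.
have hi01 : i1 != i0 by [].
have hh : forall P, exists h : 'I_d -> L, MP P -> h i0 = g1 /\ (forall j, I (h j)) /\ good R P I h.
  move=> P; case: (classic (MP P)) => [[hP hPN]|hn]; last by exists (fun _ => 0).
  have [h0 [hh0 hg0]] := hloc P hP.
  have [h' hh'] := exchange i0 hP hI hh0 hg0 hg1I (hg1P P hP hPN).
  by exists h'.
have [H hH] := fchoice hh.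
have hc : forall j : 'I_d, exists c, I c /\
    forall P, is_maximal_ideal R P -> P N%:R -> PX P I (c - H P j).
  move=> j.
  have [c [hcI hcP]] := crt (S := MP) (v := fun P => H P j) hN hI (fun P hP => (hH P hP).2.1 j).
  by exists c; split => // P hP hPN; apply: hcP => //; split.
have [c hcc] := fchoice hc.
have [N' [hN' [r1 [hr1 eN']]]] := stepB (Isub hI hg1I) hg10.
pose MQ Q := is_maximal_ideal R Q /\ ~ Q N%:R.
have hw : forall Q, exists w, MQ Q -> R w /\ Q (c i1 + N2 * w - 1).
  move=> Q; case: (classic (MQ Q)) => [[hQ hQN]|hn]; last by exists 0.
  have hN2Q : ~ Q N2 by apply: (m_mul hQ hNR hNR hQN hQN).
  have [u [hu hu1]] := m_inv hQ (RM hNR hNR) hN2Q.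
  have hc1R : R (c i1) := Isub hI (hcc i1).1.
  exists (u * (1 - c i1)) => _; split; first by apply: RM => //; apply: RB => //; exact: R1.
  have -> : c i1 + N2 * (u * (1 - c i1)) - 1 = (u * N2 - 1) * (1 - c i1) by rewrite /N2; ring.
  by apply: (IMr (mI hQ)) => //; apply: RB => //; exact: R1.
have [w hwQ] := fchoice hw.
have [f [hfR hf]] := crt (S := MQ) (X := R) (v := w) hN' idealR (fun Q hQ => (hwQ Q hQ).1).
pose g := fun j : 'I_d => if j == i0 then g1 else if j == i1 then c i1 + N2 * f else c j.
have hgI : forall j, I (g j).
  move=> j; rewrite /g; case: ifP => _ //; case: ifP => _; last exact: (hcc j).1.
  apply: (ID hI (hcc i1).1).
  have -> : N2 * f = (N%:R * f) * N%:R by rewrite /N2; ring.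
  by apply: (IM hI) => //; apply: RM.
have hgood : forall P, is_maximal_ideal R P -> good R P I g.
  move=> P hP; have hPi := mI hP.
  case: (classic (P N%:R)) => hPN.
    have [hH0 [hHI hHg]] := hH P (conj hP hPN).
    apply: (good_congr hPi hI hHg) => j.
    rewrite /g; case: ifP => [/eqP ->|hj0]; first by rewrite hH0 subrr; apply: PX0.
    case: ifP => [/eqP ->|_]; last exact: (hcc j).2 P hP hPN.
    have -> : c i1 + N2 * f - H P i1 = (c i1 - H P i1) + N%:R * (N%:R * f) by rewrite /N2; ring.
    apply: (PXD hPi hI); first exact: (hcc i1).2 P hP hPN.
    by apply: (PXm hPi hI) => //; apply: (IMr hI hfR hNI).
  have hgi1 : g i1 = c i1 + N2 * f by rewrite /g (negbTE hi01) eqxx.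
  case: (classic (P N'%:R)) => hPN'.
    apply: (good_unit hP hI (span_gen g i1)); first by apply: (Isub hI (hgI i1)).
    move=> hPg; apply: (m_not1 hP).
    have h1 := (hwQ P (conj hP hPN)).2.
    have h2 : P (f - w P) by apply: (PX_P hPi idealR); apply: hf.
    have -> : 1 = g i1 - ((c i1 + N2 * w P - 1) + N2 * (f - w P)) by rewrite hgi1; ring.
    apply: (IB hPi hPg); apply: (ID hPi h1); apply: (IM hPi) => //; exact: (RM hNR hNR).
  apply: (good_unit hP hI _ (Rnat N') hPN').
  rewrite eN' mulrC.
  have -> : g1 = g i0 by rewrite /g eqxx.
  exact: (IM (span_ideal (fun j => Isub hI (hgI j))) hr1 (span_gen g i0)).
exists g; split => // x; split; last exact: back.
move=> hx.
pose C y := R y /\ spn g (y * x).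
have hxR := Isub hI hx.
have hsp := span_ideal (fun j => Isub hI (hgI j)).
have hC : is_ideal R C.
  split; first by move=> y [].
  split; first by split; [exact: R0 | rewrite mul0r; exact: (I0 hsp)].
  split.
    by move=> y z [hy1 hy2] [hz1 hz2]; split; [exact: RD | rewrite mulrDl; exact: (ID hsp)].
  by move=> r y hr [hy1 hy2]; split; [exact: RM | rewrite -mulrA; exact: (IM hsp)].
case: (classic (C 1)) => [[_ h1]|hC1]; first by rewrite -[x]mul1r.
have hCN' : C N'%:R.
  split; first exact: Rnat.
  rewrite eN'.
  have -> : g1 * r1 * x = (r1 * x) * g i0 by rewrite /g eqxx; ring.
  exact: (IM hsp (RM hr1 hxR) (span_gen g i0)).
have [P [hP hCP]] := max_exists hC hN' hCN' hC1.
have hloc2 : forall y, I y -> exists j, spn g j /\ PX P I (y - j).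
  move=> y hy0; have [b [hb hpx]] := hgood P hP y hy0.
  by exists (\sum_l b l * g l); split => //; exists b.
have [t [ht [hnt hCt]]] := nakayama hP hI hsp hfI hfsp hloc2 hx.
by exfalso; apply: hnt; apply: hCP; split.
Qed.

End Nine.


End P9.
Import P9.

Unset Implicit Arguments.
Theorem lemma4p5 (L : fieldExtType rat) (R I : L -> Prop) :
  is_subring R -> is_ideal R I ->
  forall d : nat, (2 <= d)%N ->
    (generated_by R I d <->
     forall P : L -> Prop, is_maximal_ideal R P ->
       generated_by (localization R P) (loc_ideal R P I) d).
Proof.
move=> HR hI d hd; split.
  by move=> hg P hP; apply: (gen_to_loc HR hP hI hg).
move=> hloc.
have [g [hgI hg]] := hard HR hI hd (fun P hP => loc_to_good HR hP hI (hloc P hP)).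
by exists g; split.
Qed.
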